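(* Let $w$ be a word of length $k$. Then for every $n > 2k$, $H_w(n) \ge \sum_{i \in I} H_w(n-k+i)$.
   Context: Let $\Omega$ be a finite alphabet with $q\ge2$ letters; $w = w_k\dots w_1$. $h_w(n)$: number of strings of length $n$ over $\Omega$ whose last $k$ characters form $w$ and with no other occurrence of $w$ as a block of $k$ consecutive characters ($h_w(n)=0$ for $n<k$). $H_w(n) = q h_w(n-1) - h_w(n)$. Autocorrelation digits: $b_i = 1$ ($1\le i\le k$) iff $w_j = w_{k-i+j}$ for $j=1,\dots,i$. For $1\le i\le k-1$ with $b_i=1$, $[i] = \max\{j\in\{1,\dots,k-1\} : b_j = 1,\ i = k-t(k-j) \text{ for some integer } 1\le t\le\lfloor k/(k-j)\rfloor\}$; $I = \{[i] : 1\le i\le k-1,\ b_i=1\}$ (empty if no such $i$). *)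

(* Defs.v *)
From mathcomp Require Import all_boot all_order all_algebra.
Set Implicit Arguments. Unset Strict Implicit. Unset Printing Implicit Defensive.
Import GRing.Theory Num.Theory.

Section Words.
Variable T : finType.

(* The paper writes
   w = w_k ... w_1, so w_j (1 <= j <= k) is the j-th letter from the RIGHT,
   i.e. the entry of index (k - j) of the seq (0-based from the left). *)
Definition letter (w : seq T) (j : nat) : option T :=
  nth None (map Some w) (size w - j).

Definition occurs_at (w s : seq T) (p : nat) : bool :=
  (p + size w <= size s) && (take (size w) (drop p s) == w).

Definition h (w : seq T) (n : nat) : nat :=
  if n < size w then 0 else
  #|[pred s : n.-tuple T |
      [forall p : 'I_(n - size w).+1,
         occurs_at w s p == (val p == n - size w)]]|.

Definition H (w : seq T) (n : nat) : int :=
  (#|T| * h w n.-1)%:Z - (h w n)%:Z.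

Definition b (w : seq T) (i : nat) : bool :=
  (1 <= i <= size w) &&
  [forall j : 'I_i, letter w j.+1 == letter w (size w - i + j.+1)].

Definition rep (w : seq T) (i : nat) : nat :=
  let k := size w in
  \max_(j < k | (0 < val j) && b w j &&
          [exists t : 'I_(k %/ (k - j)).+1, (0 < val t) && (i == k - t * (k - j))])
    val j.

Definition Iset (w : seq T) : seq nat :=
  undup [seq rep w i | i <- iota 1 (size w).-1 & b w i].

End Words.

(* Main.v *)
Require Import Defs.
From mathcomp Require Import all_boot all_order all_algebra.
From mathcomp Require Import zify.
Import GRing.Theory Num.Theory.
Set Implicit Arguments. Unset Strict Implicit. Unset Printing Implicit Defensive.

Section Aux.
Variable T : finType.
Variable w : seq T.
Local Notation k := (size w).

Lemma occ_cat (x y : seq T) p :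
  occurs_at w (x ++ y) (size x + p) = occurs_at w y p.
Proof.
rewrite /occurs_at size_cat drop_cat ltnNge leq_addr /= addKn.
by rewrite -addnA leq_add2l.
Qed.

Lemma occ_behead (s : seq T) p : 0 < k ->
  occurs_at w s p.+1 = occurs_at w (behead s) p.
Proof.
move=> k0; case: s => [|c s] /=.
  by rewrite /occurs_at /=; case: (p + k) (k) k0 => [|?] [|?] //=; rewrite ?andbF // ; lia.
by rewrite -(occ_cat [:: c]).
Qed.

Lemma occ_nth (s : seq T) r x0 : occurs_at w s r ->
  forall j, j < k -> nth x0 s (r + j) = nth x0 w j.
Proof.
move=> /andP [hs /eqP ht] j hj.
by rewrite -nth_drop -(nth_take _ hj) ht.
Qed.

Lemma occ_w0 (e : seq T) : occurs_at w (w ++ e) 0.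
Proof. by rewrite /occurs_at drop0 take_size_cat // size_cat add0n leq_addr eqxx. Qed.

Definition OE (s : seq T) : bool :=
  [forall p : 'I_(size s).+1, occurs_at w s p == (val p == size s - k)].

Lemma occ_big (s : seq T) p : size s < p -> occurs_at w s p = false.
Proof. move=> h; rewrite /occurs_at; apply/negbTE; apply/nandP; left; lia. Qed.

Lemma occ_over (s : seq T) p : size s - k < p -> occurs_at w s p = false.
Proof. move=> h; rewrite /occurs_at; apply/negbTE; apply/nandP; left; lia. Qed.

Lemma OEP s : k <= size s ->
  reflect (forall p, occurs_at w s p = (p == size s - k)) (OE s).
Proof.
move=> hk; apply: (iffP forallP) => H p.
  case: (ltnP p (size s).+1) => hp; first by have /eqP := H (Ordinal hp).
  rewrite occ_big; last lia. symmetry; apply/eqP; lia.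
by rewrite H.
Qed.

Lemma OE_cons c (t : seq T) : 0 < k -> k <= size t ->
  OE (c :: t) = OE t && ~~ occurs_at w (c :: t) 0.
Proof.
move=> k0 hk.
apply/idP/idP.
  move/(OEP _) => H; have {}H := H (leq_trans hk (leqnSn _)).
  apply/andP; split.
    apply/OEP => // p. rewrite -(occ_behead (c :: t)) // H /=. apply/eqP/eqP; lia.
  by rewrite H /=; apply/eqP; lia.
move=> /andP [/OEP H] hn; apply/OEP => /=; first lia.
case=> [|p]; first by rewrite (negbTE hn); symmetry; apply/eqP; lia.
rewrite (occ_behead (c :: t)) // H //= . apply/eqP/eqP; lia.
Qed.

End Aux.

Local Open Scope ring_scope.

Local Open Scope nat_scope.
Section Count.
Variable T : finType.

Lemma card_tsum N (P : pred (seq T)) :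
  #|[pred t : N.-tuple T | P t]| = \sum_(t : N.-tuple T) P t.
Proof.
rewrite -sum1_card big_mkcond /=; apply: eq_bigr => t _.
by rewrite inE; case: (P t).
Qed.

Lemma sum_cons N (F : seq T -> nat) :
  \sum_(t : N.+1.-tuple T) F t = \sum_(c : T) \sum_(t : N.-tuple T) F (c :: t).
Proof.
rewrite pair_bigA /=.
rewrite (reindex (fun p : T * N.-tuple T => [tuple of p.1 :: p.2])) //=.
exists (fun t : N.+1.-tuple T => (thead t, [tuple of behead t])).
  by case=> c t _ /=; congr pair; apply: val_inj.
by move=> t _; rewrite [in RHS](tuple_eta t).
Qed.

Lemma card_inj N1 N2 (P1 P2 : pred (seq T)) (f : seq T -> seq T) (x0 : T) :
  (forall s, size s = N1 -> P1 s -> size (f s) = N2 /\ P2 (f s)) ->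
  (forall s1 s2, size s1 = N1 -> size s2 = N1 -> P1 s1 -> P1 s2 -> f s1 = f s2 -> s1 = s2) ->
  #|[pred t : N1.-tuple T | P1 t]| <= #|[pred t : N2.-tuple T | P2 t]|.
Proof.
move=> Hf Hi.
pose g := fun t : N1.-tuple T => (insubd [tuple of nseq N2 x0] (f t) : N2.-tuple T).
have vg (t : N1.-tuple T) : P1 t -> val (g t) = f t.
  move=> ht; rewrite val_insubd; have [-> _] := Hf t (size_tuple t) ht.
  by rewrite eqxx.
rewrite -(card_in_imset (f := g)); last first.
  move=> t1 t2; rewrite !inE => h1 h2 /(congr1 val); rewrite !vg // => e.
  by apply: val_inj; apply: Hi => //; rewrite size_tuple.
apply: subset_leq_card; apply/subsetP => y /imsetP [t ht ->].
move: ht; rewrite !inE => ht; rewrite vg //.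
by have [_ ->] := Hf t (size_tuple t) ht.
Qed.

Variable w : seq T.
Local Notation k := (size w).

Definition hp (a : seq T) : bool := occurs_at w a 0 && OE w (behead a).
Definition Hc N := #|[pred a : N.-tuple T | hp a]|.

Lemma h_card N : k <= N -> h w N = #|[pred s : N.-tuple T | OE w s]|.
Proof.
move=> hN; rewrite /h ltnNge hN /=; apply: eq_card => s; rewrite !inE.
apply/idP/idP.
  move/forallP => H; apply/OEP; rewrite size_tuple // => p.
  case: (ltnP p (N - k).+1) => hp.
    by have /eqP := H (Ordinal hp).
  rewrite occ_over ?size_tuple; last lia. symmetry; apply/eqP; lia.
move/OEP; rewrite size_tuple => /(_ hN) H; apply/forallP => p.
by rewrite H.
Qed.

Lemma H_eq N : 0 < k -> k < N -> H w N = (Hc N)%:Z.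
Proof.
move=> k0 hN; case: N hN => [|N] hN; first lia.
rewrite /H /= !h_card //; last lia.
rewrite /Hc !card_tsum.
have -> : (#|T| * \sum_(t : N.-tuple T) OE w t =
   \sum_(t : N.+1.-tuple T) OE w t + \sum_(t : N.+1.-tuple T) hp t)%N.
  rewrite (sum_cons _ (fun s => nat_of_bool (OE w s))) (sum_cons _ (fun s => nat_of_bool (hp s))) -big_split /= -sum_nat_const; apply: eq_bigr => c _.
  rewrite -big_split /=; apply: eq_bigr => t _.
  rewrite /hp /= OE_cons //; last by rewrite size_tuple; lia.
  by case: (OE w t); case: (occurs_at w (c :: t) 0).
by rewrite PoszD addrAC subrr add0r.
Qed.

End Count.

Section FW.
Variable T : Type.

Lemma FWQ : forall s p d (g : nat -> T), p + d <= s -> 0 < p -> 0 < d ->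
  (forall i, i < d - 1 -> g i = g (i + p)) ->
  (forall i, i < p - 1 -> g i = g (i + d)) -> g (p - 1) = g (d - 1).
Proof.
elim=> [|s IH] p d g hs hp hd Hp Hd; first lia.
case: (ltngtP p d) => hpd; last by rewrite hpd.
- have e1 : g (d - 1) = g (d - p - 1).
    have := Hp (d - p - 1) ltac:(lia). by rewrite (_ : d - p - 1 + p = d - 1) //; lia.
  rewrite e1; apply: (IH p (d - p)) => //; try lia.
    move=> i hi; apply: Hp; lia.
  move=> i hi. rewrite Hd; last lia.
  have := Hp (i + (d - p)) ltac:(lia). by rewrite (_ : i + (d - p) + p = i + d) //; lia.
- have e1 : g (p - 1) = g (p - d - 1).
    have := Hd (p - d - 1) ltac:(lia). by rewrite (_ : p - d - 1 + d = p - 1) //; lia.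
  rewrite e1; apply: (IH (p - d) d) => //; try lia.
    move=> i hi. rewrite Hp; last lia.
    have := Hd (i + (p - d)) ltac:(lia). by rewrite (_ : i + (p - d) + d = i + p) //; lia.
  move=> i hi; apply: Hd; lia.
Qed.
End FW.

Section Letter.
Variable T : finType.
Variable w : seq T.
Local Notation k := (size w).

Lemma occ_ext (c : T) (e0 : seq T) r x0 : occurs_at w (w ++ c :: e0) r -> 0 < r -> r <= k ->
  [/\ c = nth x0 w (k - r),
      forall j, r + j < k -> nth x0 w (r + j) = nth x0 w j &
      forall t, 0 < t -> t < r -> nth x0 e0 t.-1 = nth x0 w (k - r + t)].
Proof.
move=> ho r0 rk; have H := occ_nth x0 ho.
split.
- have := H (k - r) ltac:(lia). rewrite (_ : r + (k - r) = k); last lia.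
  by rewrite nth_cat ltnn subnn.
- move=> j hj; have := H j ltac:(lia). by rewrite nth_cat hj.
- move=> t t0 tr; have := H (k - r + t) ltac:(lia).
  rewrite (_ : r + (k - r + t) = k + t); last lia.
  rewrite nth_cat ltnNge leq_addr /= (_ : k + t - k = t); last lia.
  by case: t t0 {tr}.
Qed.

Lemma letter_uniq (c c' : T) (e0 : seq T) r r' :
  0 < r -> r <= k -> 0 < r' -> r' <= k ->
  occurs_at w (w ++ c :: e0) r -> occurs_at w (w ++ c' :: e0) r' -> c = c'.
Proof.
wlog le : c c' r r' / r <= r'.
  move=> W h1 h2 h3 h4 o1 o2; case: (leqP r r') => hr.
    exact: (W c c' r r').
  symmetry; apply: (W c' c r' r) => //; lia.
move=> r0 rk r'0 r'k o1 o2.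
have [c1 P1 E1] := occ_ext c o1 r0 rk.
have [c2 P2 E2] := occ_ext c o2 r'0 r'k.
rewrite c1 c2.
case: (ltngtP r r') => hr; [|lia|by rewrite hr].
set W := nth c w.
have key : W (k - r) = W (k - (r' - r)).
  have := FWQ (s := r') (p := r) (d := r' - r) (g := fun j => W (k - 1 - j)) ltac:(lia) r0 ltac:(lia).
  rewrite (_ : k - 1 - (r - 1) = k - r); last lia.
  rewrite (_ : k - 1 - (r' - r - 1) = k - (r' - r)); last lia.
  apply.
    move=> i hi /=. have := P1 (k - 1 - (i + r)) ltac:(lia).
    rewrite (_ : r + (k - 1 - (i + r)) = k - 1 - i); last lia. by [].
  move=> i hi /=. have := E1 (r - 1 - i) ltac:(lia) ltac:(lia).
  rewrite E2; try lia.
  rewrite (_ : k - r + (r - 1 - i) = k - 1 - i); last lia.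
  by rewrite (_ : k - r' + (r - 1 - i) = k - 1 - (i + (r' - r))); last lia.
rewrite key; have := P1 (k - r') ltac:(lia).
by rewrite (_ : r + (k - r') = k - (r' - r)); last lia.
Qed.

End Letter.

Lemma take_take (U : Type) i j : i <= j -> forall (s : seq U), take i (take j s) = take i s.
Proof. by move=> h s; rewrite -take_min (minn_idPl h). Qed.

Section Main.
Variable T : finType.
Variable w : seq T.
Local Notation k := (size w).

Definition Tr r (e : seq T) : bool :=
  [&& OE w e, occurs_at w (w ++ e) r &
      [forall r' : 'I_k, (r < r') ==> ~~ occurs_at w (w ++ e) r']].

Definition Tcount r m := #|[pred e : m.-tuple T | Tr r e]|.

Lemma lemA r n (x0 : T) : 0 < r < k -> drop r w = take (k - r) w -> 2 * k <= n ->
  Hc w (n - r) <= Tcount r (n - k).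
Proof.
move=> /andP [r0 rk] per hn.
apply: (card_inj (f := drop (k - r)) x0).
  move=> s hs /andP [s0 /OEP sb].
  have {}sb := sb ltac:(rewrite size_behead; lia).
  have tk : take k s = w by case/andP: s0 => _; rewrite drop0 => /eqP.
  set e := drop (k - r) s.
  have key : w ++ e = take r w ++ s.
    rewrite -(cat_take_drop (k - r) s) catA; congr (_ ++ _).
    rewrite -(take_take (leq_subr r k)) tk.
    by rewrite -per cat_take_drop.
  have occE p : occurs_at w (w ++ e) (r + p) = occurs_at w s p.
    by rewrite key -(occ_cat _ (take r w) s p) size_takel //; lia.
  have sp p : 0 < p -> occurs_at w s p = (p == n - r - k).
    case: p => [|p] // _; rewrite (occ_behead s) ?sb; last lia.
    rewrite size_behead hs; apply/eqP/eqP; lia.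
  have se : size e = n - k by rewrite size_drop hs; lia.
  split => //.
  apply/and3P; split.
  - apply/OEP; first lia. move=> p.
    rewrite -(occ_cat w w e p) (_ : k + p = r + (k - r + p)); last lia.
    rewrite occE sp; last lia. rewrite se; apply/eqP/eqP; lia.
  - by rewrite -(addn0 r) occE.
  - apply/forallP => r'; apply/implyP => hr; have r'k := ltn_ord r'.
    rewrite (_ : nat_of_ord r' = r + (r' - r)); last lia.
    rewrite occE sp; last lia. apply/negP => /eqP; have := ltn_ord r'; lia.
move=> s1 s2 h1 h2 /andP [o1 _] /andP [o2 _] e.
have t1 : take k s1 = w by case/andP: o1 => _; rewrite drop0 => /eqP.
have t2 : take k s2 = w by case/andP: o2 => _; rewrite drop0 => /eqP.
rewrite -(cat_take_drop (k - r) s1) -(cat_take_drop (k - r) s2) e.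
by rewrite -(take_take (leq_subr r k)) t1 -(take_take (leq_subr r k) s2) t2.
Qed.

Lemma lemB n (x0 : T) : 0 < k -> 2 * k < n -> Tcount 0 (n - k) <= Hc w n.
Proof.
move=> k0 hn.
apply: (card_inj (f := cat w) x0).
  move=> e he /and3P [oe _ /forallP fa].
  split; first by rewrite size_cat he; lia.
  apply/andP; split; first by apply: occ_w0.
  apply/OEP; first by rewrite size_behead size_cat; lia.
  move=> p; rewrite -occ_behead // size_behead size_cat he.
  case: (ltnP p.+1 k) => hp.
    have := fa (Ordinal hp); rewrite /= => /negbTE ->.
    symmetry; apply/eqP; lia.
  rewrite (_ : p.+1 = k + (p.+1 - k)); last lia.
  rewrite occ_cat; move/OEP: oe => /(_ ltac:(lia)) ->; rewrite he.
  apply/eqP/eqP; lia.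
move=> s1 s2 _ _ _ _ /(congr1 (drop k)).
by rewrite !drop_size_cat.
Qed.

End Main.

Lemma sum_eq_count (s : seq nat) x : \sum_(i <- s) (i == x) = count_mem x s.
Proof. by elim: s => [|a s IH]; rewrite ?big_nil ?big_cons //= IH. Qed.

Lemma bigmax_prop n (P : pred 'I_n) (Q : nat -> Prop) :
  (exists j, P j) -> (forall j, P j -> Q (val j)) -> Q (\max_(j | P j) val j).
Proof.
move=> [j Pj] HQ.
have hc : 0 < #|P| by apply/card_gt0P; exists j.
have [j0 hj0 ->] := @eq_bigmax_cond _ P (fun j : 'I_n => val j) hc.
exact: HQ.
Qed.

Section C.
Variable T : finType.
Variable w : seq T.
Local Notation k := (size w).

Lemma Iset_prop i : 0 < k -> i \in Iset w -> 0 < i < k /\ b w i.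
Proof.
move=> k0; rewrite /Iset mem_undup => /mapP [i0].
rewrite mem_filter mem_iota => /andP [bi /andP [h1 h2]] ->.
rewrite /rep; apply: (bigmax_prop (Q := fun x => 0 < x < k /\ b w x)).
  have hi0 : i0 < k by lia.
  exists (Ordinal hi0) => /=; rewrite h1 bi /=.
  have ht : 1 < (k %/ (k - i0)).+1 by rewrite ltnS divn_gt0; lia.
  by apply/existsP; exists (Ordinal ht) => /=; apply/eqP; lia.
move=> [j hj] /andP [/andP [j0 bj] _]; split => //; rewrite /= in j0 *; lia.
Qed.

Lemma b_per i (x0 : T) : 0 < i < k -> b w i -> drop (k - i) w = take i w.
Proof.
move=> hi /andP [_ /forallP H].
apply: (@eq_from_nth _ x0); first by rewrite size_drop size_takel; lia.
move=> t; rewrite size_drop => ht; rewrite nth_drop nth_take; last lia.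
have hj : i - 1 - t < i by lia.
have := H (Ordinal hj); rewrite /letter /=.
rewrite (nth_map x0); last lia. rewrite (nth_map x0); last lia.
move/eqP => [].
rewrite (_ : k - (i - 1 - t).+1 = k - i + t); last lia.
by rewrite (_ : k - (k - i + (i - 1 - t).+1) = t); last lia.
Qed.

Definition U (e : seq T) : bool := [exists r : 'I_k, (0 < r) && Tr w r e].

Lemma Tr_uniq r r' e : r < k -> r' < k -> Tr w r e -> Tr w r' e -> r = r'.
Proof.
move=> rk r'k /and3P [_ o1 /forallP f1] /and3P [_ o2 /forallP f2].
case: (ltngtP r r') => // h.
  by have := f1 (Ordinal r'k); rewrite /= h o2.
by have := f2 (Ordinal rk); rewrite /= h o1.
Qed.

Lemma sum_le_U (ls : seq nat) e : uniq ls -> (forall i, i \in ls -> 0 < i < k) ->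
  \sum_(i <- ls) Tr w (k - i) e <= U e.
Proof.
move=> ui hi.
case hx: (has (fun i => Tr w (k - i) e) ls); last first.
  rewrite big1_seq //= => i hin.
  by move/hasPn: hx => /(_ i hin) /negbTE ->.
case/hasP: hx => i0 hin0 ht0.
have hk0 := hi i0 hin0.
have -> : U e.
  have hr : k - i0 < k by lia.
  by apply/existsP; exists (Ordinal hr) => /=; rewrite ht0; lia.
apply: (leq_trans (n := \sum_(i <- ls) (i == i0))).
  rewrite big_seq [X in _ <= X]big_seq; apply: leq_sum => i hin.
  case ht: (Tr w (k - i) e) => //.
  have := Tr_uniq (r := k - i) (r' := k - i0) ltac:(have := hi i hin; lia) ltac:(lia) ht ht0.
  have := hi i hin => ? ?. rewrite (_ : i = i0) ?eqxx //; lia.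
by rewrite sum_eq_count count_uniq_mem // leq_b1.
Qed.

Lemma per_e0 (e0 : seq T) : 0 < k -> k <= size e0 -> 1 < #|T| ->
  \sum_(c : T) U (c :: e0) <= \sum_(c : T) Tr w 0 (c :: e0).
Proof.
move=> k0 hk hT.
case: (boolP [exists c, U (c :: e0)]); last first.
  move/existsPn => H; rewrite big1 // => c _; by rewrite (negbTE (H c)).
move/existsP => [cs /existsP [rs /andP [rs0 hTs]]].
have os : occurs_at w (w ++ cs :: e0) rs by case/and3P: hTs.
have oth c r : 0 < r -> r <= k -> occurs_at w (w ++ c :: e0) r -> c = cs.
  move=> h1 h2 o; apply: (letter_uniq h1 h2 rs0 (ltnW (ltn_ord rs)) o os).
have L1 : \sum_(c : T) U (c :: e0) <= 1.
  rewrite (bigD1 cs) //= big1 ?addn0 ?leq_b1 // => c hc.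
  case hU: (U (c :: e0)) => //; exfalso; move: hU => /existsP [r /andP [r0 /and3P [_ o _]]].
  by move/eqP: hc; apply; apply: (oth c r r0 (ltnW (ltn_ord r)) o).
apply: (leq_trans L1).
have [c hc] : exists c, c != cs.
  case/card_gt1P: hT => x [y [_ _ xy]].
  case: (eqVneq x cs) => hx; last by exists x.
  by exists y; rewrite -hx eq_sym.
rewrite (bigD1 c) //=.
suff -> : Tr w 0 (c :: e0) by [].
have [oe0 _] : OE w e0 /\ true.
  by case/and3P: hTs; rewrite OE_cons // => /andP [-> _].
apply/and3P; split.
- rewrite OE_cons // oe0 /=; apply/negP => o.
  move: o; rewrite -(occ_cat w w (c :: e0) 0) addn0 => o.
  by move/eqP: hc; apply; apply: (oth c k k0 (leqnn _) o).
- exact: occ_w0.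
- apply/forallP => r; apply/implyP => r0; apply/negP => o.
  by move/eqP: hc; apply; apply: (oth c r r0 (ltnW (ltn_ord r)) o).
Qed.

Lemma lemC (ls : seq nat) m : 0 < k -> k < m -> 1 < #|T| -> uniq ls ->
  (forall i, i \in ls -> 0 < i < k) ->
  \sum_(i <- ls) Tcount w (k - i) m <= Tcount w 0 m.
Proof.
move=> k0 km hT ui hi.
rewrite /Tcount (card_tsum _ (Tr w 0)).
under eq_bigr => i _ do rewrite (card_tsum _ (Tr w (k - i))).
rewrite exchange_big /=.
apply: (leq_trans (n := \sum_(e : m.-tuple T) U e)).
  by apply: leq_sum => e _; apply: sum_le_U.
case: m km => [|m] km; first lia.
rewrite (sum_cons _ (fun s => nat_of_bool (U s))) (sum_cons _ (fun s => nat_of_bool (Tr w 0 s))).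
rewrite exchange_big [X in _ <= X]exchange_big /=.
apply: leq_sum => e0 _; apply: per_e0 => //; rewrite size_tuple; lia.
Qed.

End C.

Unset Implicit Arguments.
Local Open Scope ring_scope.

Theorem corollary4p5 (T : finType) (w : seq T) (n : nat) :
  (1 < #|T|)%N -> (0 < size w)%N -> (2 * size w < n)%N ->
  \sum_(i <- Iset w) H w (n - size w + i) <= H w n.
Proof.
move=> hT k0 hn.
have /card_gt0P [x0 _] : (0 < #|T|)%N by lia.
have E : \sum_(i <- Iset w) H w (n - size w + i) =
         \sum_(i <- Iset w) ((Hc w (n - (size w - i)))%:Z).
  rewrite big_seq [RHS]big_seq; apply: eq_bigr => i hi.
  have [/andP [i0 ik] _] := Iset_prop k0 hi.
  rewrite (_ : (n - size w + i = n - (size w - i))%N); last lia.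
  apply: H_eq => //; lia.
rewrite E H_eq //; last lia.
rewrite -(big_morph (fun m : nat => m%:Z) PoszD (erefl _)) lez_nat.
apply: (leq_trans (n := (\sum_(i <- Iset w) Tcount w (size w - i) (n - size w))%N)).
  rewrite big_seq [X in (_ <= X)%N]big_seq; apply: leq_sum => i hi.
  have [/andP [i0 ik] bi] := Iset_prop k0 hi.
  apply: (lemA x0); first by apply/andP; split; lia.
    by rewrite (_ : (size w - (size w - i) = i)%N); [apply: b_per => //; apply/andP|lia].
  lia.
have hm : (size w < n - size w)%N by lia.
apply: leq_trans (lemC k0 hm hT (undup_uniq _) _) (lemB x0 k0 hn).
by move=> i hi; have [] := Iset_prop k0 hi.
Qed.
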